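(* For all integers $a,b,c,d,e$: $$(F_{d-c}L_{e-b}-F_{e-c}L_{d-b})F_{c-a}=(F_{e-a}F_{d-c}-F_{d-a}F_{e-c})L_{c-b},$$ $$(J_{d-c}j_{e-b}-J_{e-c}j_{d-b})J_{c-a}=(J_{e-a}J_{d-c}-J_{d-a}J_{e-c})j_{c-b},$$ $$(P_{d-c}Q_{e-b}-P_{e-c}Q_{d-b})P_{c-a}=(P_{e-a}P_{d-c}-P_{d-a}P_{e-c})Q_{c-b}.$$
   Context: All sequences are indexed by $n\in\mathbb Z$. Fibonacci numbers $F_n$ and Lucas numbers $L_n$: $F_n=F_{n-1}+F_{n-2}$, $L_n=L_{n-1}+L_{n-2}$ for all $n\in\mathbb Z$, with $F_0=0,F_1=1,L_0=2,L_1=1$ (so $F_{-n}=(-1)^{n-1}F_n$, $L_{-n}=(-1)^nL_n$). Jacobsthal numbers $J_n$ and Jacobsthal–Lucas numbers $j_n$: $J_n=J_{n-1}+2J_{n-2}$, $j_n=j_{n-1}+2j_{n-2}$ for all $n\in\mathbb Z$, with $J_0=0,J_1=1,j_0=2,j_1=1$ (so $J_{-n}=(-1)^{n-1}2^{-n}J_n$, $j_{-n}=(-1)^n2^{-n}j_n$, rational for negative index). Pell numbers $P_n$ and Pell–Lucas numbers $Q_n$: $P_n=2P_{n-1}+P_{n-2}$, $Q_n=2Q_{n-1}+Q_{n-2}$ for all $n\in\mathbb Z$, with $P_0=0,P_1=1,Q_0=2,Q_1=2$ (so $P_{-n}=(-1)^{n-1}P_n$, $Q_{-n}=(-1)^nQ_n$).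 *)

(* Defs.v *)
(* Two-sided linear recurrences x_n = p x_{n-1} + q x_{n-2}
   (n : int), with values in rat (Jacobsthal numbers are rational for negative
   index). *)
From HB Require Import structures.
From mathcomp Require Import all_boot all_order all_algebra.
Set Implicit Arguments. Unset Strict Implicit. Unset Printing Implicit Defensive.
Import Order.TTheory GRing.Theory Num.Theory.
Local Open Scope ring_scope.

Definition rec_fwd (p q : rat) (u : rat * rat) : rat * rat :=
  (u.2, p * u.2 + q * u.1).
Definition rec_bwd (p q : rat) (u : rat * rat) : rat * rat :=
  ((u.2 - p * u.1) / q, u.1).

Definition rec_seq (p q x0 x1 : rat) (n : int) : rat :=
  match n with
  | Posz m => (iter m (rec_fwd p q) (x0, x1)).1
  | Negz m => (iter m.+1 (rec_bwd p q) (x0, x1)).1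
  end.

Definition Fib  : int -> rat := rec_seq 1 1 0 1.
Definition Luc  : int -> rat := rec_seq 1 1 2 1.
Definition Jac  : int -> rat := rec_seq 1 2 0 1.
Definition JacL : int -> rat := rec_seq 1 2 2 1.
Definition Pell : int -> rat := rec_seq 2 1 0 1.
Definition PellL : int -> rat := rec_seq 2 1 2 2.

Example fib_m3 : Fib (- 3%:Z) = 2%:R. Proof. by rewrite /Fib /rec_seq /=; vm_compute. Qed.
Example jac_m2 : Jac (- 2%:Z) = - (1 / 4%:R). Proof. by vm_compute. Qed.
Example pellL_m1 : PellL (- 1%:Z) = - 2%:R. Proof. by vm_compute. Qed.
Example luc_5 : Luc 5%:Z = 11%:R. Proof. by vm_compute. Qed.

(* Main.v *)
Require Import Defs.
From HB Require Import structures.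
From mathcomp Require Import all_boot all_order all_algebra.
From mathcomp Require Import zify ring.
Import Order.TTheory GRing.Theory Num.Theory.
Local Open Scope ring_scope.

Lemma iterbwd (p q x0 x1 : rat) m :
  iter m (rec_bwd p q) (x0, x1) =
  (rec_seq p q x0 x1 (Negz m + 1), rec_seq p q x0 x1 (Negz m + 2)).
Proof.
elim: m => [|m IH].
  by have -> : Negz 0 + 1 = 0 :> int by []; have -> : Negz 0 + 2 = 1 :> int by [].
rewrite iterS.
have -> : Negz m.+1 + 1 = Negz m by rewrite !NegzE; lia.
have -> : Negz m.+1 + 2 = Negz m + 1 by rewrite !NegzE; lia.
by rewrite /= IH.
Qed.

Lemma rstep (p q x0 x1 : rat) (hq : q != 0) n :
  rec_seq p q x0 x1 (n + 2) = p * rec_seq p q x0 x1 (n + 1) + q * rec_seq p q x0 x1 n.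
Proof.
case: n => m.
  have -> : Posz m + 2 = Posz m.+2 by lia.
  have -> : Posz m + 1 = Posz m.+1 by lia.
  by rewrite /= addrC.
have E : rec_seq p q x0 x1 (Negz m) =
   (rec_seq p q x0 x1 (Negz m + 2) - p * rec_seq p q x0 x1 (Negz m + 1)) / q.
  by rewrite /= iterbwd.
by rewrite E; field.
Qed.

Lemma addf (p q : rat) (U V : int -> rat) (hq : q != 0)
 (hU : forall n, U (n + 2) = p * U (n + 1) + q * U n)
 (hV : forall n, V (n + 2) = p * V (n + 1) + q * V n)
 (U0 : U 0 = 0) (U1 : U 1 = 1) m n :
  V (m + n) = U n * V (m + 1) + q * U (n - 1) * V m.
Proof.
have hU' : forall k, U (k + 1) = p * U k + q * U (k - 1).
  move=> k; have := hU (k - 1).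
  have e1 : k - 1 + 2 = k + 1 by ring.
  have e2 : k - 1 + 1 = k by ring.
  by rewrite e1 e2.
pose P n := V (m + n) = U n * V (m + 1) + q * U (n - 1) * V m.
have S : forall n, P n -> P (n + 1) -> P (n + 2).
  move=> k; rewrite /P => H1 H2.
  have e1 : k + 1 - 1 = k by ring.
  have e2 : m + (k + 1) = m + k + 1 by ring.
  have e3 : k + 2 - 1 = k + 1 by ring.
  have e4 : m + (k + 2) = m + k + 2 by ring.
  rewrite e1 e2 in H2; rewrite e3 e4.
  rewrite hV H2 H1 (hU k).
  rewrite [X in _ = _ + q * X * V m]hU'.
  ring.
have B : forall n, P (n + 1) -> P (n + 2) -> P n.
  move=> k; rewrite /P => H1 H2.
  have e1 : k + 1 - 1 = k by ring.
  have e2 : m + (k + 1) = m + k + 1 by ring.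
  have e3 : k + 2 - 1 = k + 1 by ring.
  have e4 : m + (k + 2) = m + k + 2 by ring.
  rewrite e1 e2 in H1; rewrite e3 e4 in H2.
  rewrite hV H1 (hU k) in H2.
  apply: (mulfI hq).
  have H3 : q * V (m + k) = (p * U (k + 1) + q * U k) * V (m + 1) + q * U (k + 1) * V m
     - p * (U (k + 1) * V (m + 1) + q * U k * V m) by rewrite -H2; ring.
  rewrite H3 (hU' k); ring.
have P0 : P 0.
  have := hU (-1).
  have e : -1 + 2 = 1 :> int by [].
  have e' : -1 + 1 = 0 :> int by [].
  rewrite e e' U1 U0 mulr0 add0r => h.
  by rewrite /P addr0 U0 sub0r mul0r add0r -h mul1r.
have P1 : P 1.
  rewrite /P subrr U0 U1; ring.
have Pos : forall k : nat, P k /\ P (k.+1).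
  elim=> [|k [H1 H2]]; first by split.
  split=> //.
  have e : Posz k.+2 = Posz k + 2 by rewrite -addn2.
  have e' : Posz k.+1 = Posz k + 1 by rewrite -addn1.
  rewrite e; apply: S => //; by rewrite -e'.
have Neg : forall k : nat, P (- k%:Z) /\ P (- k%:Z + 1).
  elim=> [|k [H1 H2]]; first by rewrite oppr0 add0r.
  have e1 : - (k.+1)%:Z + 1 = - k%:Z by rewrite -addn1 PoszD; ring.
  have e2 : - (k.+1)%:Z + 2 = - k%:Z + 1 by rewrite -addn1 PoszD; ring.
  rewrite e1; split=> //; apply: B; by rewrite ?e1 ?e2.
case: n => k; first by case: (Pos k).
rewrite NegzE; by case: (Neg k.+1).
Qed.

Lemma mainid (p q : rat) (U V : int -> rat) (hq : q != 0)
 (hU : forall n, U (n + 2) = p * U (n + 1) + q * U n)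
 (hV : forall n, V (n + 2) = p * V (n + 1) + q * V n)
 (U0 : U 0 = 0) (U1 : U 1 = 1) (a b c d e : int) :
  (U (d - c) * V (e - b) - U (e - c) * V (d - b)) * U (c - a)
  = (U (e - a) * U (d - c) - U (d - a) * U (e - c)) * V (c - b).
Proof.
have A1 := @addf p q U V hq hU hV U0 U1 (c - b).
have A2 := @addf p q U U hq hU hU U0 U1 (c - a).
have e1 : e - b = (c - b) + (e - c) by ring.
have e2 : d - b = (c - b) + (d - c) by ring.
have e3 : e - a = (c - a) + (e - c) by ring.
have e4 : d - a = (c - a) + (d - c) by ring.
rewrite e1 e2 e3 e4 (A1 (e - c)) (A1 (d - c)) (A2 (e - c)) (A2 (d - c)); ring.
Qed.

Theorem corollary1 (a b c d e : int) :
  [/\ (Fib (d - c) * Luc (e - b) - Fib (e - c) * Luc (d - b)) * Fib (c - a)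
        = (Fib (e - a) * Fib (d - c) - Fib (d - a) * Fib (e - c)) * Luc (c - b),
      (Jac (d - c) * JacL (e - b) - Jac (e - c) * JacL (d - b)) * Jac (c - a)
        = (Jac (e - a) * Jac (d - c) - Jac (d - a) * Jac (e - c)) * JacL (c - b)
    & (Pell (d - c) * PellL (e - b) - Pell (e - c) * PellL (d - b)) * Pell (c - a)
        = (Pell (e - a) * Pell (d - c) - Pell (d - a) * Pell (e - c)) * PellL (c - b)].
Proof.
have h1 : (1 : rat) != 0 by [].
have h2 : (2 : rat) != 0 by [].
split.
- exact: (mainid _ _ _ _ h1 (rstep 1 1 0 1 h1) (rstep 1 1 2 1 h1) (erefl : Fib 0 = 0) (erefl : Fib 1 = 1)).
- exact: (mainid _ _ _ _ h2 (rstep 1 2 0 1 h2) (rstep 1 2 2 1 h2) (erefl : Jac 0 = 0) (erefl : Jac 1 = 1)).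
- exact: (mainid _ _ _ _ h1 (rstep 2 1 0 1 h1) (rstep 2 1 2 2 h1) (erefl : Pell 0 = 0) (erefl : Pell 1 = 1)).
Qed.
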